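(* Let $(X,d)$ be a $\delta$-Gromov hyperbolic space, $p\in X$, $\epsilon>0$, and $X^\epsilon=(X,d_\epsilon)$ the uniformized space. Let $x\in\partial_{d_\epsilon}X^\epsilon$. Then every sequence $(x_n)\subseteq X$ converging to $x$ with respect to $d_\epsilon$ has a subsequence $(x_{n_k})_k$ which is a Gromov sequence.
   Context: Gromov product $(x|y)_p=\frac12(d(p,x)+d(p,y)-d(x,y))$. $\delta$-Gromov hyperbolic: unbounded, proper, geodesic, and $(x|z)_p\ge\min\{(x|y)_p,(y|z)_p\}-\delta$ for all $x,y,z,p$. Uniformized metric: $d_\epsilon(x,y)=\inf_\gamma\int_\gamma e^{-\epsilon d(p,z)}ds(z)$ over $d$-rectifiable curves from $x$ to $y$; $\partial_{d_\epsilon}X^\epsilon=\overline{X^\epsilon}\setminus X^\epsilon$ (closure in the completion). A Gromov sequence is $(x_n)$ with $(x_n|x_m)_p\to\infty$ as $n,m\to\infty$. *)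

(* Defs.v *)
From Stdlib Require Import Reals List.
Open Scope R_scope.

Definition is_metric {X : Type} (d : X -> X -> R) : Prop :=
  (forall x y, d x y = 0 <-> x = y) /\
  (forall x y, d x y = d y x) /\
  (forall x y z, d x z <= d x y + d y z).

Definition is_glb (E : R -> Prop) (m : R) : Prop :=
  (forall y, E y -> m <= y) /\ (forall b, (forall y, E y -> b <= y) -> b <= m).

Definition gromov_prod {X : Type} (d : X -> X -> R) (p x y : X) : R :=
  (d p x + d p y - d x y) / 2.

Definition open_set {X : Type} (d : X -> X -> R) (U : X -> Prop) : Prop :=
  forall x, U x -> exists r, 0 < r /\ forall y, d x y < r -> U y.

Definition compact_set {X : Type} (d : X -> X -> R) (K : X -> Prop) : Prop :=
  forall (I : Type) (U : I -> X -> Prop),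
    (forall i, open_set d (U i)) ->
    (forall x, K x -> exists i, U i x) ->
    exists l : list I, forall x, K x -> exists i, In i l /\ U i x.

Definition proper_space {X : Type} (d : X -> X -> R) : Prop :=
  forall (c : X) (r : R), compact_set d (fun y => d c y <= r).

Definition geodesic_space {X : Type} (d : X -> X -> R) : Prop :=
  forall x y : X, exists g : R -> X,
    g 0 = x /\ g (d x y) = y /\
    forall s t, 0 <= s <= d x y -> 0 <= t <= d x y -> d (g s) (g t) = Rabs (s - t).

Definition unbounded_space {X : Type} (d : X -> X -> R) : Prop :=
  forall M : R, exists x y : X, d x y > M.

Definition gromov_hyperbolic {X : Type} (d : X -> X -> R) (delta : R) : Prop :=
  is_metric d /\ unbounded_space d /\ proper_space d /\ geodesic_space d /\
  forall x y z p : X,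
    gromov_prod d p x z >= Rmin (gromov_prod d p x y) (gromov_prod d p y z) - delta.

(** [part a b l] : [a :: l] is a strictly increasing partition of [a,b] ending at b *)
Fixpoint part (a b : R) (l : list R) : Prop :=
  match l with
  | nil => a = b
  | t :: l' => a < t /\ part t b l'
  end.

Fixpoint poly_len {X : Type} (d : X -> X -> R) (g : R -> X) (t0 : R) (l : list R) : R :=
  match l with
  | nil => 0
  | t1 :: l' => d (g t0) (g t1) + poly_len d g t1 l'
  end.

Definition curve_length {X : Type} (d : X -> X -> R) (g : R -> X) (a b L : R) : Prop :=
  is_lub (fun v => exists l, part a b l /\ v = poly_len d g a l) L.

Definition continuous_on {X : Type} (d : X -> X -> R) (g : R -> X) (a b : R) : Prop :=
  forall t, a <= t <= b -> forall eta, 0 < eta ->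
    exists mu, 0 < mu /\ forall s, a <= s <= b -> Rabs (s - t) < mu -> d (g s) (g t) < eta.

Definition rectifiable {X : Type} (d : X -> X -> R) (g : R -> X) (a b : R) : Prop :=
  a <= b /\ continuous_on d g a b /\ exists L, curve_length d g a b L.

(** lower Darboux-Stieltjes sums of f along g with respect to arc length:
    sum over the pieces [t_{i-1},t_i] of (inf of f o g on the piece) * (length of the piece) *)
Fixpoint lower_sum_rel {X : Type} (d : X -> X -> R) (f : X -> R) (g : R -> X)
    (t0 : R) (l : list R) (v : R) : Prop :=
  match l with
  | nil => v = 0
  | t1 :: l' => exists m L v',
      is_glb (fun y => exists t, t0 <= t <= t1 /\ y = f (g t)) m /\
      curve_length d g t0 t1 L /\
      lower_sum_rel d f g t1 l' v' /\ v = m * L + v'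
  end.

Definition line_integral {X : Type} (d : X -> X -> R) (f : X -> R) (g : R -> X) (a b I : R) : Prop :=
  is_lub (fun v => exists l, part a b l /\ lower_sum_rel d f g a l v) I.

Definition uniformized_dist {X : Type} (d : X -> X -> R) (p : X) (eps : R) (x y : X) (v : R) : Prop :=
  is_glb (fun I => exists (g : R -> X) (a b : R),
             rectifiable d g a b /\ g a = x /\ g b = y /\
             line_integral d (fun z => exp (- eps * d p z)) g a b I) v.

Definition complete_space {Y : Type} (D : Y -> Y -> R) : Prop :=
  forall u : nat -> Y,
    (forall eta, 0 < eta -> exists N, forall n m, (N <= n)%nat -> (N <= m)%nat -> D (u n) (u m) < eta) ->
    exists y, forall eta, 0 < eta -> exists N, forall n, (N <= n)%nat -> D (u n) y < eta.

Definition is_completion {X Y : Type} (de : X -> X -> R) (D : Y -> Y -> R) (iota : X -> Y) : Prop :=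
  is_metric D /\ complete_space D /\
  (forall x y, D (iota x) (iota y) = de x y) /\
  (forall y eta, 0 < eta -> exists x, D y (iota x) < eta).

Definition gromov_sequence {X : Type} (d : X -> X -> R) (p : X) (u : nat -> X) : Prop :=
  forall M : R, exists N, forall n m, (N <= n)%nat -> (N <= m)%nat -> gromov_prod d p (u n) (u m) > M.

(* Main.v *)
Require Import Defs.
From Stdlib Require Import Reals List.
From Stdlib Require Import Lra Lia Classical ClassicalEpsilon.
Open Scope R_scope.

Section M.
Context {X : Type} (d : X -> X -> R) (Hm : is_metric d).

Lemma d_refl x : d x x = 0.
Proof. destruct Hm as [H _]. apply H. reflexivity. Qed.
Lemma d_sym x y : d x y = d y x.
Proof. destruct Hm as [_ [H _]]. apply H. Qed.
Lemma d_tri x y z : d x z <= d x y + d y z.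
Proof. destruct Hm as [_ [_ H]]. apply H. Qed.
Lemma d_nonneg x y : 0 <= d x y.
Proof. pose proof (d_tri x y x). rewrite d_refl, (d_sym y x) in H. lra. Qed.
Lemma d_eq0 x y : d x y = 0 -> x = y.
Proof. destruct Hm as [H _]. apply H. Qed.

Definition infinite (S : nat -> Prop) := forall N, exists n, (N <= n)%nat /\ S n.

Fixpoint maxsnd {I : Type} (l : list (I * nat)) : nat :=
  match l with nil => O | i :: l' => Nat.max (snd i) (maxsnd l') end.

Lemma maxsnd_in {I : Type} (l : list (I * nat)) i : In i l -> (snd i <= maxsnd l)%nat.
Proof.
  induction l as [|j l IH]; simpl; [tauto|].
  intros [<-|H]; [lia|]. specialize (IH H). lia.
Qed.

Lemma cluster (c : X) (r : R) (u : nat -> X) (S : nat -> Prop) :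
  compact_set d (fun y => d c y <= r) -> infinite S ->
  (forall n, S n -> d c (u n) <= r) ->
  exists z, d c z <= r /\ forall eta, 0 < eta -> forall N,
    exists n, (N <= n)%nat /\ S n /\ d z (u n) < eta.
Proof.
  intros Hc HS Hu. apply NNPP. intro Hno.
  assert (Hz : forall z, d c z <= r -> exists eta N, 0 < eta /\
     forall n, (N <= n)%nat -> S n -> ~ d z (u n) < eta).
  { intros z Hz. apply NNPP. intro Hn. apply Hno. exists z. split; auto.
    intros eta Heta N. apply NNPP. intro H2. apply Hn. exists eta, N. split; auto.
    intros n Hn1 Hn2 Hn3. apply H2. exists n. split; [exact Hn1|split; [exact Hn2|]]. exact Hn3. }
  destruct (Hc (X * nat)%type (fun i w => exists eta, 0 < eta /\
      (forall n, (snd i <= n)%nat -> S n -> ~ d (fst i) (u n) < eta) /\ d (fst i) w < eta))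
    as [l Hl].
  - intros [y N] w [eta [He [HP Hd]]]. simpl in Hd. exists (eta - d y w). split; [lra|].
    intros w' Hw'. exists eta. split; [auto|split; [auto|]]. simpl.
    pose proof (d_tri y w w'). simpl in *. lra.
  - intros z Hzr. destruct (Hz z Hzr) as [eta [N [He HP]]]. exists (z, N), eta.
    simpl. rewrite d_refl. auto.
  - destruct (HS (maxsnd l)) as [n [Hn HSn]].
    destruct (Hl (u n) (Hu n HSn)) as [[y N] [Hin [eta [He [HP Hd]]]]].
    apply (HP n); auto. pose proof (maxsnd_in l _ Hin). simpl in *. lia.
Qed.

Section Geo.
Variable g : R -> X.
Variable L : R.
Hypothesis Hg : forall s t, 0 <= s <= L -> 0 <= t <= L -> d (g s) (g t) = Rabs (s - t).

Lemma part_le s t l : part s t l -> s <= t.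
Proof.
  revert s. induction l as [|a l IH]; simpl; intros s H.
  - subst; lra.
  - destruct H as [H1 H2]. specialize (IH _ H2). lra.
Qed.

Lemma poly_geo l : forall s t, 0 <= s -> t <= L -> part s t l -> poly_len d g s l = t - s.
Proof.
  induction l as [|a l IH]; simpl; intros s t H0 H1 H.
  - subst; lra.
  - destruct H as [Ha Hp]. pose proof (part_le _ _ _ Hp).
    rewrite (IH a t); try lra; auto. rewrite Hg by lra.
    rewrite Rabs_left by lra. lra.
Qed.

Lemma curve_len_geo s t : 0 <= s < t -> t <= L -> curve_length d g s t (t - s).
Proof.
  intros H1 H2. split.
  - intros v [l [Hp ->]]. rewrite (poly_geo l s t); [lra|lra|lra|exact Hp].
  - intros b Hb. apply Hb. exists (t :: nil). simpl. split; [lra|].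
    rewrite Hg by lra. rewrite Rabs_left by lra. lra.
Qed.

Lemma curve_len_geo_eq s t Lc : 0 <= s < t -> t <= L -> curve_length d g s t Lc -> Lc = t - s.
Proof.
  intros H1 H2 H3. pose proof (curve_len_geo s t H1 H2) as H4.
  destruct H3 as [A1 A2]. destruct H4 as [B1 B2].
  apply Rle_antisym; [apply A2; exact B1 | apply B2; exact A1].
Qed.

Variable f : X -> R.
Hypothesis Hf1 : forall z, f z <= 1.

Lemma lower_le l : forall s v, 0 <= s -> part s L l -> lower_sum_rel d f g s l v -> v <= L - s.
Proof.
  induction l as [|a l IH]; simpl; intros s v H0 Hp Hv.
  - subst; lra.
  - destruct Hp as [Ha Hp]. destruct Hv as [m [Lc [v' [Hglb [Hcl [Hv' ->]]]]]].
    pose proof (part_le _ _ _ Hp).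
    pose proof (curve_len_geo_eq s a Lc ltac:(lra) H Hcl) as ->.
    assert (m <= 1).
    { destruct Hglb as [Hg1 _]. eapply Rle_trans; [apply Hg1|apply (Hf1 (g s))].
      exists s. split; [lra|auto]. }
    specialize (IH a v' ltac:(lra) Hp Hv'). nra.
Qed.
End Geo.

Lemma glb_exists (F : R -> Prop) : (exists y, F y) -> (forall y, F y -> 0 <= y) -> exists m, is_glb F m.
Proof.
  intros [y0 Hy0] Hpos.
  destruct (completeness (fun y => F (- y))) as [M [HM1 HM2]].
  - exists 0. intros y Hy. specialize (Hpos _ Hy). lra.
  - exists (- y0). rewrite Ropp_involutive. auto.
  - exists (- M). split.
    + intros y Hy. assert (- y <= M). { apply HM1. rewrite Ropp_involutive. auto. } lra.
    + intros b Hb. assert (M <= - b). { apply HM2. intros y Hy. specialize (Hb _ Hy). lra. } lra.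
Qed.

End M.

Lemma de_le_d {X Y : Type} (d : X -> X -> R) p eps (de : X -> X -> R) (D : Y -> Y -> R) iota :
  is_metric d -> geodesic_space d -> 0 < eps ->
  (forall y z, uniformized_dist d p eps y z (de y z)) -> is_metric D ->
  (forall x y, D (iota x) (iota y) = de x y) ->
  forall a b, de a b <= d a b.
Proof.
  intros Hm Hgeo He Hu HD Hiso a b.
  destruct (Rle_lt_or_eq_dec 0 (d a b) (d_nonneg d Hm a b)) as [Hlt|Heq].
  2:{ symmetry in Heq. apply (d_eq0 d Hm) in Heq. subst b.
      rewrite <- Hiso, (d_refl D HD), (d_refl d Hm). lra. }
  set (L := d a b). assert (HL : 0 < L) by exact Hlt.
  destruct (Hgeo a b) as [g [Hg0 [HgL Hg]]]. fold L in HgL, Hg.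
  set (f := fun z => exp (- eps * d p z)).
  assert (Hf1 : forall z, f z <= 1).
  { intro z. unfold f. rewrite <- exp_0.
    assert (Hz : - eps * d p z <= 0) by (pose proof (d_nonneg d Hm p z); nra).
    destruct (Rle_lt_or_eq_dec _ _ Hz) as [h|h];
      [left; apply exp_increasing; exact h | rewrite h; right; reflexivity]. }
  set (E := fun v => exists l, part 0 L l /\ lower_sum_rel d f g 0 l v).
  assert (HEb : forall v, E v -> v <= L).
  { intros v [l [Hp Hv]]. pose proof (lower_le d g L Hg f Hf1 l 0 v ltac:(lra) Hp Hv). lra. }
  assert (HEn : exists v, E v).
  { assert (N1 : exists y, (fun y => exists t, 0 <= t <= L /\ y = f (g t)) y).
    { exists (f (g 0)). exists 0. split; [split; lra|auto]. }
    assert (N2 : forall y, (fun y => exists t, 0 <= t <= L /\ y = f (g t)) y -> 0 <= y).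
    { intros y [t [_ ->]]. unfold f. left. apply exp_pos. }
    destruct (glb_exists _ N1 N2) as [m Hglb].
    exists (m * (L - 0) + 0). exists (L :: nil). split.
      + simpl. split; auto.
      + simpl. exists m, (L - 0), 0. split; [auto|split; [|split; auto]].
        apply (curve_len_geo d g L Hg); lra. }
  assert (HEb' : bound E) by (exists L; intros v Hv; auto).
  destruct (completeness E HEb' HEn) as [I HI].
  assert (I <= L). { destruct HI as [_ HI2]. apply HI2. intros v Hv. auto. }
  destruct (Hu a b) as [Hglb _].
  eapply Rle_trans; [apply Hglb|exact H].
  exists g, 0, L. split; [|split; [auto|split; [auto|exact HI]]].
  split; [lra|split].
  - intros t Ht eta Heta. exists eta. split; auto. intros s Hs Hst.
    rewrite Hg by lra. auto.
  - exists (L - 0). apply (curve_len_geo d g L Hg); lra.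
Qed.

Theorem lemma3p4 (X : Type) (d : X -> X -> R) (delta : R) (p : X) (eps : R)
  (de : X -> X -> R) (Y : Type) (D : Y -> Y -> R) (iota : X -> Y) (x : Y) :
  gromov_hyperbolic d delta ->
  0 < eps ->
  (forall y z : X, uniformized_dist d p eps y z (de y z)) ->
  is_completion de D iota ->
  (* x lies in the boundary: in the closure of X^eps inside the completion, but not in X^eps *)
  (forall eta, 0 < eta -> exists z : X, D x (iota z) < eta) ->
  (forall z : X, iota z <> x) ->
  forall xs : nat -> X,
    (forall eta, 0 < eta -> exists N, forall n, (N <= n)%nat -> D (iota (xs n)) x < eta) ->
    exists phi : nat -> nat,
      (forall k, (phi k < phi (S k))%nat) /\
      gromov_sequence d p (fun k => xs (phi k)).
Proof.
  intros Hhyp Heps Hu Hcomp Hcl Hnot xs Hconv.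
  destruct Hhyp as [Hm [_ [Hprop [Hgeo H4]]]].
  destruct Hcomp as [HD [_ [Hiso _]]].
  pose proof (de_le_d d p eps de D iota Hm Hgeo Heps Hu HD Hiso) as Hdd.
  assert (Hdel : 0 <= delta).
  { specialize (H4 p p p p). unfold gromov_prod in H4. rewrite (d_refl d Hm) in H4.
    unfold Rmin in H4; destruct Rle_dec; lra. }
  assert (Hunb : forall K, exists N, forall n, (N <= n)%nat -> K < d p (xs n)).
  { intro K. apply NNPP. intro Hn.
    assert (HS : infinite (fun n => d p (xs n) <= K)).
    { intro N. apply NNPP. intro H2. apply Hn. exists N. intros n Hn1.
      apply Rnot_le_lt. intro H3. apply H2. exists n. auto. }
    destruct (cluster d Hm p K xs _ (Hprop p K) HS (fun n h => h)) as [z [_ Hz]].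
    apply (Hnot z).
    assert (Hx0 : D x (iota z) = 0).
    { destruct (Rle_lt_or_eq_dec 0 (D x (iota z)) (d_nonneg D HD _ _)) as [Hpos|Heq]; [|auto].
      exfalso.
      destruct (Hconv (D x (iota z) / 2) ltac:(lra)) as [N1 HN1].
      destruct (Hz (D x (iota z) / 2) ltac:(lra) N1) as [n [Hn1 [_ Hn2]]].
      specialize (HN1 n Hn1).
      pose proof (d_tri D HD x (iota (xs n)) (iota z)) as Ht.
      rewrite (d_sym D HD x (iota (xs n))), Hiso in Ht. pose proof (Hdd (xs n) z).
      rewrite (d_sym d Hm) in Hn2. lra. }
    symmetry. apply (d_eq0 D HD). exact Hx0. }
  pose (G := fun n => proj1_sig (constructive_indefinite_description _ (Hgeo p (xs n)))).
  assert (HG : forall n, G n 0 = p /\ G n (d p (xs n)) = xs n /\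
     forall s t, 0 <= s <= d p (xs n) -> 0 <= t <= d p (xs n) -> d (G n s) (G n t) = Rabs (s - t)).
  { intro n. exact (proj2_sig (constructive_indefinite_description _ (Hgeo p (xs n)))). }
  assert (Hgp : forall (k : nat) n, INR k <= d p (xs n) ->
     d p (G n (INR k)) = INR k /\
     gromov_prod d p (xs n) (G n (INR k)) = INR k /\ gromov_prod d p (G n (INR k)) (xs n) = INR k).
  { intros k n Hk. destruct (HG n) as [g0 [gA gi]].
    pose proof (pos_INR k).
    assert (E1 : d p (G n (INR k)) = INR k).
    { replace (d p (G n (INR k))) with (d (G n 0) (G n (INR k))) by (rewrite g0; reflexivity).
      rewrite gi by lra. rewrite Rminus_0_l, Rabs_Ropp, Rabs_pos_eq; lra. }
    assert (E2 : d (xs n) (G n (INR k)) = d p (xs n) - INR k).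
    { replace (d (xs n) (G n (INR k))) with (d (G n (d p (xs n))) (G n (INR k))) by (rewrite gA; reflexivity).
      rewrite gi by lra. rewrite Rabs_pos_eq; lra. }
    unfold gromov_prod. rewrite (d_sym d Hm (G n (INR k)) (xs n)). rewrite E1, E2.
    split; [reflexivity|split; field]. }
  assert (Hstep : forall (T : nat -> Prop) (k : nat), exists T' : nat -> Prop, infinite T ->
     (infinite T' /\ (forall n, T' n -> T n) /\ (forall n, T' n -> INR k <= d p (xs n)) /\
      (forall n m, T' n -> T' m -> d (G n (INR k)) (G m (INR k)) < 1))).
  { intros T k. destruct (classic (infinite T)) as [HT|HT]; [|exists T; tauto].
    destruct (Hunb (INR k)) as [Nk HNk].
    set (T1 := fun n => T n /\ (Nk <= n)%nat).
    assert (HT1 : infinite T1).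
    { intro N. destruct (HT (Nat.max N Nk)) as [n [h1 h2]]. exists n. unfold T1.
      split; [lia|split; [auto|lia]]. }
    assert (Hball : forall n, T1 n -> d p (G n (INR k)) <= INR k).
    { intros n [h1 h2]. specialize (HNk n h2). rewrite (proj1 (Hgp k n ltac:(lra))). lra. }
    destruct (cluster d Hm p (INR k) (fun n => G n (INR k)) T1 (Hprop p (INR k)) HT1 Hball)
      as [z [_ Hz]].
    exists (fun n => T1 n /\ d z (G n (INR k)) < 1/2). intros _. split; [|split; [|split]].
    - intro N. destruct (Hz (1/2) ltac:(lra) N) as [n [h1 [h2 h3]]]. exists n. auto.
    - intros n [[h _] _]. auto.
    - intros n [[_ h] _]. left. apply HNk; auto.
    - intros n m [_ h1] [_ h2]. pose proof (d_tri d Hm (G n (INR k)) z (G m (INR k))) as Ht.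
      rewrite (d_sym d Hm _ z) in Ht. lra. }
  pose (step := fun T k => proj1_sig (constructive_indefinite_description _ (Hstep T k))).
  assert (Hstep' : forall T k, infinite T ->
     (infinite (step T k) /\ (forall n, step T k n -> T n) /\ (forall n, step T k n -> INR k <= d p (xs n)) /\
      (forall n m, step T k n -> step T k m -> d (G n (INR k)) (G m (INR k)) < 1))).
  { intros T k. exact (proj2_sig (constructive_indefinite_description _ (Hstep T k))). }
  pose (Ts := fix F (k : nat) : nat -> Prop :=
          match k with O => step (fun _ => True) O | S k' => step (F k') (S k') end).
  assert (HTs : forall k, infinite (Ts k) /\ (forall n, Ts k n -> INR k <= d p (xs n)) /\
     (forall n m, Ts k n -> Ts k m -> d (G n (INR k)) (G m (INR k)) < 1)).
  { induction k as [|k IH].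
    - destruct (Hstep' (fun _ => True) O) as [A [B [C E]]].
      + intro N. exists N. split; [lia|exact I].
      + split; [exact A|split; [exact C|exact E]].
    - destruct (Hstep' (Ts k) (S k) (proj1 IH)) as [A [B [C E]]].
      split; [exact A|split; [exact C|exact E]]. }
  assert (Hsub : forall k n, Ts (S k) n -> Ts k n).
  { intros k n. exact (proj1 (proj2 (Hstep' (Ts k) (S k) (proj1 (HTs k)))) n). }
  assert (Hnest : forall j k, (k <= j)%nat -> forall n, Ts j n -> Ts k n).
  { induction j as [|j IH]; intros k Hk n Hn.
    - assert (k = O) by lia. subst. exact Hn.
    - destruct (Nat.le_succ_r k j) as [H1 _]. destruct (H1 Hk) as [H2|H2].
      + apply IH; auto.
      + subst. exact Hn. }
  pose (pick := fun k N => proj1_sig (constructive_indefinite_description _ (proj1 (HTs k) N))).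
  assert (Hpick : forall k N, (N <= pick k N)%nat /\ Ts k (pick k N)).
  { intros k N. exact (proj2_sig (constructive_indefinite_description _ (proj1 (HTs k) N))). }
  pose (phi := fix F (k : nat) : nat :=
          match k with O => pick O O | S k' => pick (S k') (S (F k')) end).
  assert (Hphi : forall i, Ts i (phi i)).
  { intro i; destruct i as [|i]; [exact (proj2 (Hpick 0%nat 0%nat)) | exact (proj2 (Hpick _ _))]. }
  exists phi. split.
  - intro k. exact (proj1 (Hpick (S k) (S (phi k)))).
  - intro M. destruct (INR_archimed 1 (M + 2 * delta + 1) ltac:(lra)) as [k Hk].
    exists k. intros j l Hj Hl. cbv beta.
    pose proof (Hnest j k Hj _ (Hphi j)) as Aj. pose proof (Hnest l k Hl _ (Hphi l)) as Al.
    destruct (HTs k) as [_ [Hk1 Hk2]].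
    pose proof (Hk2 _ _ Aj Al) as Huv.
    destruct (Hgp k (phi j) (Hk1 _ Aj)) as [Du [Eau _]].
    destruct (Hgp k (phi l) (Hk1 _ Al)) as [Dv [_ Evb]].
    set (a := xs (phi j)) in *. set (b := xs (phi l)) in *.
    set (u := G (phi j) (INR k)) in *. set (v := G (phi l) (INR k)) in *.
    assert (Euv : gromov_prod d p u v > INR k - 1/2).
    { unfold gromov_prod. rewrite Du, Dv. lra. }
    pose proof (H4 a u b p) as F1. pose proof (H4 u v b p) as F2.
    assert (Rmin (gromov_prod d p u v) (gromov_prod d p v b) >= INR k - 1/2).
    { apply Rle_ge, Rmin_glb; lra. }
    assert (Rmin (gromov_prod d p a u) (gromov_prod d p u b) >= INR k - 1/2 - delta).
    { apply Rle_ge, Rmin_glb; lra. }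
    lra.
Qed.
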